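(* Fix a constant $\alpha\ge 1$. Let $T$ be the uncompressed octree over $[0,U]^3$, with $U$ a power of $2$. For each node $u$ of $T$, let $P(u)$ be defined as in the context. Then every $\alpha$-fat axis-parallel box $R$ with integer corner coordinates in $[0,U]$ satisfies $R\in P(u)$ for at most $O(1)$ nodes $u$ of $T$, where the constant depends only on $\alpha$.
   Context: The uncompressed octree $T$ over $[0,U]^3$ is the complete tree in which the root has cell $\mathrm{cell}(\text{root})=[0,U]^3$. Every node whose cell has side length greater than $1$ has eight children, whose cells are the eight equal octants of its cell. For a node $u$, the set $P(u)$ consists of all boxes $R$ such that (i) $R$ contains at least one corner (vertex) of $\mathrm{cell}(u)$, and (ii) $R$ contains no corner of $\mathrm{cell}(w)$ for any proper ancestor $w$ of $u$. Boxes are closed. An axis-parallel box is $\alpha$-fat if the ratio of its longest edge length to its shortest edge length is at most $\alpha$. *)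

(* Defs.v *)
From Stdlib Require Import Reals Arith List.
Open Scope R_scope.

(* A node at level j has cell [a 2^j,(a+1) 2^j] x [b 2^j,(b+1) 2^j] x [c 2^j,(c+1) 2^j]
   (side length 2^j); the root is the unique node of level k, leaves have level 0. *)
Record node : Type := mkNode { lvl : nat; ia : nat; ib : nat; ic : nat }.

Definition valid_node (k : nat) (u : node) : Prop :=
  (lvl u <= k)%nat /\
  (ia u < 2 ^ (k - lvl u))%nat /\ (ib u < 2 ^ (k - lvl u))%nat /\
  (ic u < 2 ^ (k - lvl u))%nat.

(* w is a proper ancestor of u in the tree: the children of (j,a,b,c) are the
   (j-1, 2a+e1, 2b+e2, 2c+e3), so the ancestor of u at level j' > lvl u is
   obtained by integer division of the indices by 2^(j' - lvl u). *)
Definition proper_ancestor (k : nat) (w u : node) : Prop :=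
  (lvl u < lvl w)%nat /\ (lvl w <= k)%nat /\
  ia w = Nat.div (ia u) (2 ^ (lvl w - lvl u)) /\
  ib w = Nat.div (ib u) (2 ^ (lvl w - lvl u)) /\
  ic w = Nat.div (ic u) (2 ^ (lvl w - lvl u)).

Definition is_corner (u : node) (x y z : nat) : Prop :=
  (x = ia u * 2 ^ lvl u \/ x = (ia u + 1) * 2 ^ lvl u)%nat /\
  (y = ib u * 2 ^ lvl u \/ y = (ib u + 1) * 2 ^ lvl u)%nat /\
  (z = ic u * 2 ^ lvl u \/ z = (ic u + 1) * 2 ^ lvl u)%nat.

Record box : Type := mkBox { x1 : nat; x2 : nat; y1 : nat; y2 : nat; z1 : nat; z2 : nat }.

Definition box_valid (k : nat) (Bx : box) : Prop :=
  (x1 Bx <= x2 Bx <= 2 ^ k)%nat /\ (y1 Bx <= y2 Bx <= 2 ^ k)%nat /\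
  (z1 Bx <= z2 Bx <= 2 ^ k)%nat.

Definition in_box (Bx : box) (x y z : nat) : Prop :=
  (x1 Bx <= x <= x2 Bx)%nat /\ (y1 Bx <= y <= y2 Bx)%nat /\ (z1 Bx <= z <= z2 Bx)%nat.

Definition edge_x (Bx : box) : R := INR (x2 Bx - x1 Bx).
Definition edge_y (Bx : box) : R := INR (y2 Bx - y1 Bx).
Definition edge_z (Bx : box) : R := INR (z2 Bx - z1 Bx).

(* alpha-fat: the ratio longest edge / shortest edge is at most alpha
   (for the ratio to be defined the shortest edge must be positive). *)
Definition fat (alpha : R) (B : box) : Prop :=
  0 < Rmin (edge_x B) (Rmin (edge_y B) (edge_z B)) /\
  Rmax (edge_x B) (Rmax (edge_y B) (edge_z B)) /
    Rmin (edge_x B) (Rmin (edge_y B) (edge_z B)) <= alpha.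

Definition inP (k : nat) (B : box) (u : node) : Prop :=
  (exists x y z, is_corner u x y z /\ in_box B x y z) /\
  (forall w, proper_ancestor k w u ->
     forall x y z, is_corner w x y z -> ~ in_box B x y z).

(* Main.v *)
Require Import Defs.
From Stdlib Require Import Reals Arith List Lia Lra Classical ZArith.
Open Scope R_scope.

Lemma div2_facts (n : nat) : (n = 2 * (n/2) + n mod 2 /\ n mod 2 < 2)%nat.
Proof. split; [apply Nat.div_mod; lia | apply Nat.mod_upper_bound; lia]. Qed.

Lemma coord_parent (ia X x x1 x2 : nat) :
  (x = ia*X \/ x = (ia+1)*X)%nat -> (x1 <= x <= x2)%nat -> (2*X <= x2 - x1)%nat ->
  exists x', (x' = (ia/2)*(2*X) \/ x' = (ia/2+1)*(2*X))%nat /\ (x1 <= x' <= x2)%nat.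
Proof.
  intros Hx Hb He. destruct (div2_facts ia) as [Hd Hm].
  set (q := (ia/2)%nat) in *. set (r := (ia mod 2)%nat) in *.
  assert (Hr : r = 0%nat \/ r = 1%nat) by lia.
  assert (HP : (q*(2*X) <= x <= q*(2*X) + 2*X)%nat).
  { rewrite Hd in Hx. destruct Hr as [Hr|Hr]; rewrite Hr in Hx; destruct Hx; subst x; nia. }
  destruct (le_lt_dec x1 (q*(2*X))) as [H|H].
  - exists (q*(2*X))%nat. split; [left; reflexivity| lia].
  - exists ((q+1)*(2*X))%nat. split; [right; reflexivity| nia].
Qed.

Lemma coord_even (ia X x : nat) : (0 < X)%nat ->
  (x = ia*X \/ x = (ia+1)*X)%nat -> (exists m, x = (2*m)*X)%nat ->
  (x = (ia/2)*(2*X) \/ x = (ia/2+1)*(2*X))%nat.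
Proof.
  intros HX Hx [m Hm]. destruct (div2_facts ia) as [Hd Hmo].
  remember (ia/2)%nat as q. remember (ia mod 2)%nat as r.
  destruct Hx as [Hx|Hx]; rewrite Hx in Hm; apply Nat.mul_cancel_r in Hm; try lia.
  - left. rewrite Hx. clear Heqq Heqr. replace q with m by lia. nia.
  - right. rewrite Hx. clear Heqq Heqr. assert (q + 1 = m)%nat by lia. rewrite Hm, <- H. ring.
Qed.

Definition parent (u : node) : node := mkNode (S (lvl u)) (ia u / 2) (ib u / 2) (ic u / 2).

Lemma parent_anc k u : (lvl u < k)%nat -> proper_ancestor k (parent u) u.
Proof.
  intros H. unfold proper_ancestor, parent.
  cbn [lvl ia ib ic]. replace (S (lvl u) - lvl u)%nat with 1%nat by lia. repeat split; try reflexivity; lia.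
Qed.

Lemma parent_lemma k B u x y z :
  (lvl u < k)%nat ->
  (forall w, proper_ancestor k w u -> forall x y z, is_corner w x y z -> ~ in_box B x y z) ->
  is_corner u x y z -> in_box B x y z ->
  (2*2^lvl u <= x2 B - x1 B)%nat -> (2*2^lvl u <= y2 B - y1 B)%nat ->
  (2*2^lvl u <= z2 B - z1 B)%nat -> False.
Proof.
  intros Hk Hanc [Cx [Cy Cz]] [Bx [By Bz]] Ex Ey Ez.
  destruct (coord_parent _ _ _ _ _ Cx Bx Ex) as [x' [Cx' Bx']].
  destruct (coord_parent _ _ _ _ _ Cy By Ey) as [y' [Cy' By']].
  destruct (coord_parent _ _ _ _ _ Cz Bz Ez) as [z' [Cz' Bz']].
  apply (Hanc (parent u) (parent_anc k u Hk) x' y' z').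
  - unfold is_corner, parent; simpl. tauto.
  - unfold in_box; tauto.
Qed.

Lemma exact_lemma k B u x y z :
  (lvl u < k)%nat ->
  (forall w, proper_ancestor k w u -> forall x y z, is_corner w x y z -> ~ in_box B x y z) ->
  is_corner u x y z -> in_box B x y z ->
  ~ ((exists m, x = (2*m)*2^lvl u) /\ (exists m, y = (2*m)*2^lvl u) /\ (exists m, z = (2*m)*2^lvl u))%nat.
Proof.
  intros Hk Hanc [Cx [Cy Cz]] Hb [Ex [Ey Ez]].
  assert (HX : (0 < 2^lvl u)%nat) by (apply Nat.neq_0_lt_0, Nat.pow_nonzero; lia).
  apply (Hanc (parent u) (parent_anc k u Hk) x y z); [|exact Hb].
  unfold is_corner, parent; simpl. repeat split; apply coord_even; auto.
Qed.

Lemma separation (ia X x c' j j' x' x1 x2 : nat) :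
  X = (2^j)%nat -> (j < j')%nat ->
  (x = ia*X \/ x = (ia+1)*X)%nat -> ~ (exists m, x = (2*m)*X)%nat ->
  (x' = c' * 2^j')%nat -> (x1 <= x <= x2)%nat -> (x1 <= x' <= x2)%nat -> (X <= x2 - x1)%nat.
Proof.
  intros HX Hj Hx Hne Hx' B1 B2.
  assert (E : (2^j' = 2 ^ (j' - S j) * (2 * X))%nat).
  { replace j' with ((j' - S j) + S j)%nat at 1 by lia. rewrite Nat.pow_add_r. subst X. reflexivity. }
  set (m := (c' * 2^(j' - S j))%nat).
  assert (Hx'2 : (x' = (2*m)*X)%nat) by (rewrite Hx', E; unfold m; nia).
  assert (HX0 : (0 < X)%nat) by (subst X; apply Nat.neq_0_lt_0, Nat.pow_nonzero; lia).
  assert (Hc0 : exists c, x = (c*X)%nat) by (destruct Hx; eauto).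
  destruct Hc0 as [c Hxc].
  assert (Hc : c <> (2*m)%nat) by (intro Hc; apply Hne; exists m; rewrite Hxc, Hc; reflexivity).
  destruct (proj1 (Nat.lt_gt_cases c (2*m)) Hc) as [H|H].
  - assert ((c+1)*X <= (2*m)*X)%nat by (apply Nat.mul_le_mono_r; lia). nia.
  - assert (((2*m)+1)*X <= c*X)%nat by (apply Nat.mul_le_mono_r; lia). nia.
Qed.

Lemma real_pair (e f m M alpha : R) : 0 < m -> M/m <= alpha -> e <= M -> m <= f -> 1 <= alpha -> e <= alpha * f.
Proof.
  intros Hm HM He Hf Ha.
  assert (M <= alpha * m).
  { replace M with ((M/m)*m) by (field; lra). apply Rmult_le_compat_r; lra. }
  assert (alpha * m <= alpha * f) by (apply Rmult_le_compat_l; lra). lra.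
Qed.

Lemma nat_pair (e f A : nat) (alpha : R) : INR e <= alpha * INR f -> 1 <= alpha -> alpha <= INR A -> (e <= A * f)%nat.
Proof.
  intros H1 H2 H3. apply INR_le. rewrite mult_INR.
  pose proof (pos_INR f). assert (alpha * INR f <= INR A * INR f) by (apply Rmult_le_compat_r; lra). lra.
Qed.

Lemma fat_facts (alpha : R) (A : nat) (B : box) : 1 <= alpha -> alpha <= INR A -> fat alpha B ->
  let ex := (x2 B - x1 B)%nat in let ey := (y2 B - y1 B)%nat in let ez := (z2 B - z1 B)%nat in
  (1 <= ex /\ 1 <= ey /\ 1 <= ez)%nat /\
  (ex <= A*ey /\ ex <= A*ez /\ ey <= A*ex /\ ey <= A*ez /\ ez <= A*ex /\ ez <= A*ey)%nat.
Proof.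
  intros Ha HA [Hm HM] ex ey ez.
  unfold edge_x, edge_y, edge_z in *. fold ex ey ez in Hm, HM.
  set (m := Rmin (INR ex) (Rmin (INR ey) (INR ez))) in *.
  set (M := Rmax (INR ex) (Rmax (INR ey) (INR ez))) in *.
  assert (mx : m <= INR ex) by (unfold m; apply Rmin_l).
  assert (my : m <= INR ey) by (unfold m; eapply Rle_trans; [apply Rmin_r| apply Rmin_l]).
  assert (mz : m <= INR ez) by (unfold m; eapply Rle_trans; [apply Rmin_r| apply Rmin_r]).
  assert (Mx : INR ex <= M) by (unfold M; apply Rmax_l).
  assert (My : INR ey <= M) by (unfold M; eapply Rle_trans; [apply Rmax_l| apply Rmax_r]).
  assert (Mz : INR ez <= M) by (unfold M; eapply Rle_trans; [apply Rmax_r| apply Rmax_r]).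
  split.
  - assert (forall n, 0 < INR n -> (1 <= n)%nat).
    { intros n Hn. destruct n; [simpl in Hn; lra| lia]. }
    repeat split; apply H; lra.
  - repeat split; eapply nat_pair; eauto; eapply real_pair; eauto.
Qed.

Lemma index_bound (ia X x x1 x2 A : nat) : (0 < X)%nat ->
  (x = ia*X \/ x = (ia+1)*X)%nat -> (x1 <= x <= x2)%nat -> (x2 - x1 < 2*A*X)%nat ->
  (x1 / X <= ia + 1 /\ ia + 1 - x1 / X < 2*A+2)%nat.
Proof.
  intros HX Hx Hb He.
  pose proof (Nat.div_mod x1 X ltac:(lia)) as Hd. pose proof (Nat.mod_upper_bound x1 X ltac:(lia)) as Hm.
  remember (x1 / X)%nat as q. remember (x1 mod X)%nat as r. clear Heqq Heqr.
  assert (H1 : (ia*X <= x2)%nat) by (destruct Hx; nia).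
  assert (H2 : (x1 <= (ia+1)*X)%nat) by (destruct Hx; nia).
  split.
  - destruct (le_lt_dec q (ia+1)) as [H|H]; auto.
    assert ((ia+2)*X <= q*X)%nat by (apply Nat.mul_le_mono_r; lia). nia.
  - destruct (le_lt_dec (q+1+2*A) ia) as [H|H]; [|lia].
    assert ((q+1+2*A)*X <= ia*X)%nat by (apply Nat.mul_le_mono_r; lia). nia.
Qed.

Lemma comb_lt (a n b m : nat) : (a < n -> b < m -> a + n*b < n*m)%nat.
Proof. intros. nia. Qed.

Lemma comb_inj (a a' n b b' : nat) : (a < n -> a' < n -> a + n*b = a' + n*b' -> a = a' /\ b = b')%nat.
Proof.
  intros H1 H2 H3. destruct (lt_eq_lt_dec b b') as [[H|H]|H].
  - assert (n*(b+1) <= n*b')%nat by (apply Nat.mul_le_mono_l; lia). nia.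
  - subst. lia.
  - assert (n*(b'+1) <= n*b)%nat by (apply Nat.mul_le_mono_l; lia). nia.
Qed.

Lemma count_lemma (l : list node) (f : node -> nat) (C : nat) : NoDup l ->
  (forall u v, In u l -> In v l -> f u = f v -> u = v) -> (forall u, In u l -> (f u < C)%nat) ->
  (length l <= C)%nat.
Proof.
  intros Hnd Hinj Hb.
  assert (NoDup (map f l)) by (apply NoDup_map_NoDup_ForallPairs; auto; intros u v; auto).
  rewrite <- (length_map f l), <- (length_seq C 0).
  apply NoDup_incl_length; auto. intros y Hy. apply in_map_iff in Hy as [u [<- Hu]].
  apply in_seq. specialize (Hb u Hu). lia.
Qed.

Lemma sub_inj (q a b : nat) : (q <= a + 1 -> q <= b + 1 -> a + 1 - q = b + 1 - q -> a = b)%nat.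
Proof. lia. Qed.

Theorem mainTheorem8 :
  forall alpha : R, 1 <= alpha ->
  exists C : nat,
    forall (k : nat) (B : box),
      box_valid k B -> fat alpha B ->
      forall l : list node,
        NoDup l ->
        (forall u, In u l -> valid_node k u /\ inP k B u) ->
        (length l <= C)%nat.
Proof.
  intros alpha Ha.
  set (A := Z.to_nat (up alpha)).
  assert (HA : alpha <= INR A).
  { destruct (archimed alpha) as [H1 _].
    assert (Hp : (0 <= up alpha)%Z) by (apply le_IZR; lra).
    unfold A. rewrite INR_IZR_INZ, Z2Nat.id by exact Hp. lra. }
  assert (HA1 : (1 <= A)%nat) by (apply INR_le; simpl; lra).
  set (M := (2*A+2)%nat).
  exists ((A+2)*(M*(M*M)))%nat.
  intros k B HB Hfat l Hnd Hl.
  destruct (fat_facts alpha A B Ha HA Hfat) as [[Ex1 [Ey1 Ez1]] Hr].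
  set (ex := (x2 B - x1 B)%nat) in *. set (ey := (y2 B - y1 B)%nat) in *. set (ez := (z2 B - z1 B)%nat) in *.
  set (s := Nat.min ex (Nat.min ey ez)).
  assert (Hs : (s <= ex /\ s <= ey /\ s <= ez /\ 1 <= s)%nat) by (unfold s; lia).
  assert (HsA : (ex <= A*s /\ ey <= A*s /\ ez <= A*s)%nat).
  { assert (s = ex \/ s = ey \/ s = ez)%nat by (unfold s; lia).
    destruct H as [H|[H|H]]; rewrite H; repeat split; try lia; apply (Nat.mul_le_mono_r 1 A); lia. }
  set (t := Nat.log2 s).
  destruct (Nat.log2_spec s ltac:(lia)) as [Ht1 Ht2]. fold t in Ht1, Ht2.
  assert (Htk : (t <= k)%nat).
  { destruct (le_lt_dec t k) as [H|H]; auto.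
    pose proof (Nat.pow_lt_mono_r 2 k t ltac:(lia) H). unfold box_valid in HB. lia. }
  assert (HX : forall j, (0 < 2^j)%nat) by (intro; apply Nat.neq_0_lt_0, Nat.pow_nonzero; lia).
  assert (Hlt : forall u, In u l -> (t <= lvl u)%nat).
  { intros u Hu. destruct (Hl u Hu) as [Hv [[x [y [z [Hc Hb]]]] Hanc]].
    destruct (le_lt_dec t (lvl u)) as [H|H]; auto. exfalso.
    assert (H2 : (2 * 2^lvl u <= 2^t)%nat) by (apply (Nat.pow_le_mono_r 2 (S (lvl u)) t); lia).
    apply (parent_lemma k B u x y z); auto; lia. }
  assert (Hhigh : forall j, (t + A + 1 <= j)%nat -> (ex < 2^j /\ ey < 2^j /\ ez < 2^j)%nat).
  { intros j Hj.
    pose proof (Nat.pow_le_mono_r 2 (S t + A) j ltac:(lia) ltac:(lia)) as H1.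
    rewrite Nat.pow_add_r in H1. pose proof (Nat.pow_gt_lin_r 2 A ltac:(lia)) as H3.
    remember (2^(S t))%nat as P. remember (2^A)%nat as Q. remember (2^j)%nat as J.
    assert (H4 : (A * s <= A * P)%nat) by (apply Nat.mul_le_mono_l; lia).
    assert (H5 : (A * P < Q * P)%nat) by (apply Nat.mul_lt_mono_pos_r; lia).
    lia. }
  assert (Htwo : forall u u', In u l -> In u' l -> (lvl u < lvl u')%nat ->
            (ex < 2^lvl u /\ ey < 2^lvl u /\ ez < 2^lvl u)%nat -> False).
  { intros u u' Hu Hu' Hlu [Hex [Hey Hez]].
    destruct (Hl u Hu) as [Hv [[x [y [z [Hc Hb]]]] Hanc]].
    destruct (Hl u' Hu') as [Hv' [[x' [y' [z' [Hc' Hb']]]] _]].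
    assert (Hk : (lvl u < k)%nat) by (destruct Hv' as [Hv' _]; lia).
    apply (exact_lemma k B u x y z Hk Hanc Hc Hb).
    destruct Hc as [Cx [Cy Cz]]. destruct Hc' as [Cx' [Cy' Cz']]. destruct Hb as [Bx [By Bz]].
    destruct Hb' as [Bx' [By' Bz']].
    repeat split; apply NNPP; intro Hn.
    - destruct Cx' as [Cx'|Cx'];
      first [pose proof (separation (ia u) (2^lvl u) x (ia u') _ _ x' _ _ eq_refl Hlu Cx Hn Cx' Bx Bx') | pose proof (separation (ia u) (2^lvl u) x (ia u' + 1) _ _ x' _ _ eq_refl Hlu Cx Hn Cx' Bx Bx')]; lia.
    - destruct Cy' as [Cy'|Cy'];
      first [pose proof (separation (ib u) (2^lvl u) y (ib u') _ _ y' _ _ eq_refl Hlu Cy Hn Cy' By By') | pose proof (separation (ib u) (2^lvl u) y (ib u' + 1) _ _ y' _ _ eq_refl Hlu Cy Hn Cy' By By')]; lia.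
    - destruct Cz' as [Cz'|Cz'];
      first [pose proof (separation (ic u) (2^lvl u) z (ic u') _ _ z' _ _ eq_refl Hlu Cz Hn Cz' Bz Bz') | pose proof (separation (ic u) (2^lvl u) z (ic u' + 1) _ _ z' _ _ eq_refl Hlu Cz Hn Cz' Bz Bz')]; lia. }
  set (lc := fun u => Nat.min (lvl u - t) (A+1)).
  set (cx := fun u => (ia u + 1 - x1 B / 2^lvl u)%nat).
  set (cy := fun u => (ib u + 1 - y1 B / 2^lvl u)%nat).
  set (cz := fun u => (ic u + 1 - z1 B / 2^lvl u)%nat).
  assert (Hidx : forall u, In u l ->
    (x1 B / 2^lvl u <= ia u + 1 /\ cx u < M)%nat /\
    (y1 B / 2^lvl u <= ib u + 1 /\ cy u < M)%nat /\
    (z1 B / 2^lvl u <= ic u + 1 /\ cz u < M)%nat).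
  { intros u Hu. pose proof (Hlt u Hu) as Htu.
    destruct (Hl u Hu) as [Hv [[x [y [z [[Cx [Cy Cz]] [Bx [By Bz]]]]]] _]].
    assert (H2 : (2^t <= 2^lvl u)%nat) by (apply Nat.pow_le_mono_r; lia).
    simpl in Ht2.
    assert (He : forall e, (e <= A*s)%nat -> (e < 2*A*2^lvl u)%nat).
    { intros e He. remember (2^t)%nat as P. remember (2^lvl u)%nat as J.
      assert (H4 : (A * s < A * (2*P))%nat) by (apply Nat.mul_lt_mono_pos_l; lia).
      assert (H5 : (A * (2*P) <= A * (2*J))%nat) by (apply Nat.mul_le_mono_l; lia).
      lia. }
    unfold cx, cy, cz, M.
    split; [|split]; eapply (index_bound _ _ _ _ _ A (HX _)); eauto; apply He; lia. }
  assert (lc_lt : forall u, (lc u < A + 2)%nat) by (intro; unfold lc; clear; lia).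
  apply (count_lemma l (fun u => lc u + (A+2)*(cx u + M*(cy u + M*cz u)))%nat); auto.
  - intros u v Hu Hv Heq.
    destruct (Hidx u Hu) as [[Qx Ix] [[Qy Iy] [Qz Iz]]].
    destruct (Hidx v Hv) as [[Qx' Ix'] [[Qy' Iy'] [Qz' Iz']]].
    apply comb_inj in Heq; [|apply lc_lt|apply lc_lt]. destruct Heq as [E1 E2].
    apply comb_inj in E2; auto. destruct E2 as [E2 E3].
    apply comb_inj in E3; auto. destruct E3 as [E3 E4].
    pose proof (Hlt u Hu). pose proof (Hlt v Hv). unfold lc in E1.
    assert (Hlv : lvl u = lvl v).
    { assert (lvl u = lvl v \/ (t+A+1 <= lvl u /\ t+A+1 <= lvl v))%nat as [Hq|[H1 H2]] by lia; auto.
      destruct (lt_eq_lt_dec (lvl u) (lvl v)) as [[Hc|Hc]|Hc]; auto; exfalso.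
      - exact (Htwo u v Hu Hv Hc (Hhigh _ H1)).
      - exact (Htwo v u Hv Hu Hc (Hhigh _ H2)). }
    unfold cx, cy, cz in *. rewrite Hlv in *.
    assert (Ea : ia u = ia v) by exact (sub_inj _ _ _ Qx Qx' E2).
    assert (Eb : ib u = ib v) by exact (sub_inj _ _ _ Qy Qy' E3).
    assert (Ec : ic u = ic v) by exact (sub_inj _ _ _ Qz Qz' E4).
    destruct u as [lu au bu cu], v as [lv av bv cv]; simpl in *.
    subst; reflexivity.
  - intros u Hu. destruct (Hidx u Hu) as [[_ Ix] [[_ Iy] [_ Iz]]].
    apply comb_lt; [apply lc_lt|]. apply comb_lt; auto. apply comb_lt; auto.
Qed.
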